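(* Let $\kappa$ be an infinite cardinal. If $G$ is a graph with at least $\kappa$ vertices and $G$ has no independent set of size $\kappa$, then $G$ is $(\kappa,\kappa)$-connected.
   Context: A graph is a pair $(V,E)$ with $E\subseteq[V]^2$; an independent set is a set of pairwise non-adjacent vertices. For infinite cardinals $\kappa,\lambda$, a graph is $(\kappa,\lambda)$-connected if after the removal of any set of fewer than $\kappa$ vertices, the number of connected components of the remaining graph is non-zero and less than $\lambda$. *)

(* Defs.v *)
From HB Require Import structures.
From mathcomp Require Import all_boot all_order.
From mathcomp Require Import boolp classical_sets cardinality.
From Stdlib Require Import Relation_Operators.

Set Implicit Arguments.
Unset Strict Implicit.
Unset Printing Implicit Defensive.

Local Open Scope classical_set_scope.
Local Open Scope card_scope.

(* A (simple) graph on vertex type V: edge relation symmetric and irreflexive,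
   i.e. E encodes a subset of [V]^2. *)
Definition is_graph (V : Type) (E : V -> V -> Prop) : Prop :=
  (forall x y, E x y -> E y x) /\ (forall x, ~ E x x).

Definition independent (V : Type) (E : V -> V -> Prop) (I : set V) : Prop :=
  forall x y, I x -> I y -> x <> y -> ~ E x y.

Definition card_lt (T U : Type) (A : set T) (B : set U) : Prop :=
  A #<= B /\ ~ (B #<= A).

Definition induced_edge (V : Type) (E : V -> V -> Prop) (R : set V) : V -> V -> Prop :=
  fun a b => R a /\ R b /\ E a b.

Definition conn (V : Type) (E : V -> V -> Prop) (R : set V) : V -> V -> Prop :=
  clos_refl_trans V (induced_edge E R).

Definition components (V : Type) (E : V -> V -> Prop) (R : set V) : set (set V) :=
  [set C | exists x, R x /\ C = [set y | conn E R x y]].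

(* (kappa, lambda)-connected, cardinals kappa, lambda given as |K|, |L| *)
Definition kl_connected (V : Type) (E : V -> V -> Prop) (K L : Type) : Prop :=
  forall S : set V, card_lt S [set: K] ->
    components E (~` S) !=set0 /\ card_lt (components E (~` S)) [set: L].

(* Main.v *)
Require Import Defs.
From mathcomp Require Import all_boot all_order.
From mathcomp Require Import boolp classical_sets functions cardinality.
From Stdlib Require Import Relation_Operators.
Local Open Scope classical_set_scope.
Local Open Scope card_scope.

Lemma card_le_total T U (A : set T) (B : set U) : A #<= B \/ B #<= A.
Proof.
elim/Ppointed: T => T in A *; first by left; rewrite card_le_emptyl.
elim/Ppointed: U => U in B *; first by right; rewrite card_le_emptyl.
pose P (R : set (T * U)) := R `<=` A `*` B /\
  forall p q, R p -> R q -> (p.1 = q.1 <-> p.2 = q.2).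
have [R [[RAB Rinj] Rmax]] : exists R, P R /\ forall R', R `<` R' -> ~ P R'.
  apply: Zorn_bigcup => F FP Ftot; split.
    by move=> p [X FX Xp]; exact: (proj1 (FP X FX)).
  move=> p q [X FX Xp] [Y FY Yq].
  have [XY|YX] := Ftot X Y FX FY.
    by apply: (proj2 (FP Y FY)) => //; exact: XY.
  by apply: (proj2 (FP X FX)) => //; exact: YX.
have [domA|] := pselect (forall a, A a -> exists b, R (a, b)).
  left; apply/pcard_leP; apply/injfunPex.
  exists (fun a => get (fun b => R (a, b))).
    move=> a Aa; have := getPex (domA a Aa) => /RAB [] //.
  move=> a a' /[!inE] Aa Aa' e.
  have h1 := getPex (domA a Aa); have h2 := getPex (domA a' Aa').
  by have /= := proj2 (Rinj _ _ h1 h2) e.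
move=> /existsNP [a /not_implyP [Aa /forallNP na]].
have [domB|] := pselect (forall b, B b -> exists a, R (a, b)).
  right; apply/pcard_leP; apply/injfunPex.
  exists (fun b => get (fun a => R (a, b))).
    move=> b Bb; have := getPex (domB b Bb) => /RAB [] //.
  move=> b b' /[!inE] Bb Bb' e.
  have h1 := getPex (domB b Bb); have h2 := getPex (domB b' Bb').
  by have /= := proj1 (Rinj _ _ h1 h2) e.
move=> /existsNP [b /not_implyP [Bb /forallNP nb]].
exfalso; apply: (Rmax (R `|` [set (a, b)])).
  split; first by move=> p Rp; left.
  by move=> /(_ (a, b) (or_intror erefl)); apply: na.
split.
  by move=> p [/RAB//|->].
move=> p q [Rp|->] [Rq|->] //; first exact: Rinj.
- case: p Rp => x y Rp /=; split=> e; exfalso;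
    [apply: (na y) | apply: (nb x)]; by [rewrite e | rewrite -e].
- move: Rq; case: q => x y Rq /=; split=> e; exfalso;
    [apply: (na y) | apply: (nb x)]; by [rewrite e | rewrite -e].
Qed.

Lemma card_le_sub T U (A : set T) (B : set U) :
  A #<= B -> exists C, C `<=` B /\ C #= A.
Proof.
elim/Ppointed: U => U in B *.
  rewrite card_le_emptyr => /eqP ->; exists set0; split => //.
move=> /pcard_leP [f]; exists (f @` A); split.
  by move=> _ [x Ax <-]; exact: funS.
exact: card_image.
Qed.

Arguments card_le_sub {T U A B}.

Lemma conn_sym V (E : V -> V -> Prop) R x y :
  (forall x y, E x y -> E y x) -> conn E R x y -> conn E R y x.
Proof.
move=> Es; elim=> [a b [Ra [Rb Eab]] | a | a b c _ IH1 _ IH2].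
- by apply: rt_step; split; [|split; [|apply: Es]].
- exact: rt_refl.
- by eapply rt_trans; [exact: IH2 | exact: IH1].
Qed.

Lemma conn_R V (E : V -> V -> Prop) R x y : conn E R x y -> R x -> R y.
Proof.
elim=> [a b [Ra [Rb Eab]] | a | a b c _ IH1 _ IH2] //.
by move=> /IH1 /IH2.
Qed.

Arguments conn_sym {V E R x y}.
Arguments conn_R {V E R x y}.

Theorem mainTheorem8 (K : Type) (V : Type) (E : V -> V -> Prop) :
  infinite_set [set: K] ->
  is_graph E ->
  [set: K] #<= [set: V] ->
  ~ (exists I : set V, independent E I /\ I #= [set: K]) ->
  kl_connected E K K.
Proof.
move=> _ [Es _] KV noI S [SK nKS].
have [x0 Sx0] : exists x, (~` S) x.
  apply: contra_notP nKS => /forallNP h.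
  apply: card_le_trans KV _; apply: subset_card_le => x _.
  by apply: contrapT; exact: h x.
set R := ~` S.
pose pk (C : set V) : V :=
  if pselect (exists x, C x) is left h then proj1_sig (cid h) else x0.
have pkP : forall C, components E R C -> C (pk C).
  move=> C [x [Rx ->]]; rewrite /pk; case: pselect => [h|h].
    exact: (proj2_sig (cid h)).
  by exfalso; apply: h; exists x; exact: rt_refl.
have compE : forall C, components E R C -> C = [set y | conn E R (pk C) y].
  move=> C Cc; have hx := pkP C Cc; move: Cc => [x [Rx eC]].
  rewrite eC in hx *; apply/seteqP; split => y /= h.
    by eapply rt_trans; [exact: (conn_sym Es hx) | exact: h].
  by eapply rt_trans; [exact: hx | exact: h].
have compR : forall C, components E R C -> forall y, C y -> R y.
  by move=> C [x [Rx ->]] y /= /conn_R; apply.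
have same : forall C D, components E R C -> components E R D ->
    conn E R (pk C) (pk D) -> C = D.
  move=> C D Cc Dc h; rewrite {1}(compE C Cc) (compE D Dc).
  apply/seteqP; split => y /= h'.
    by eapply rt_trans; [exact: (conn_sym Es h) | exact: h'].
  by eapply rt_trans; [exact: h | exact: h'].
have nKC : ~ ([set: K] #<= components E R).
  move=> KC.
  have pkinj : {in components E R &, injective pk}.
    move=> C D /[!inE] Cc Dc e; apply: same => //; rewrite e; exact: rt_refl.
  have IC := inj_card_eq pkinj.
  have KI : [set: K] #<= pk @` components E R by rewrite (card_le_eqr IC).
  have [J [JI JK]] := card_le_sub KI.
  apply: noI; exists J; split; last exact: JK.
  move=> u v /JI [C Cc <-] /JI [D Dc <-] neq Euv; apply: neq.
  suff -> : C = D by [].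
  apply: same => //; apply: rt_step; split; first exact: compR (pkP C Cc).
  by split; first exact: compR (pkP D Dc).
split; first by exists (conn E R x0); exists x0.
split => //.
by have [//|/nKC] := card_le_total _ _ (components E R) [set: K].
Qed.
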